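(* Let $X$ be a pure $d$-dimensional simplicial complex, $0\le k\le d-1$, $0\le i\le d-k$, $\sigma\in X(k+i)$ and $r$ a face of $R_k(X)$ with $\bigcup r=\sigma$. Then $$w_{R_k(X)}(r)=\frac{1}{|\{r'\in R_k(X):\textstyle\bigcup r'=\sigma\}|}\,w_X(\sigma),$$ where $|\{r':\bigcup r'=\sigma\}|=\binom{k+i+1}{k}$ if $i>0$ and $=1$ if $i=0$.
   Context: $X(j)$ = faces with $j+1$ elements. For a pure $D$-dimensional complex $Y$, $w_Y(\sigma)=|\{\tau\in Y(D):\sigma\subseteq\tau\}|/(\binom{D+1}{|\sigma|}|Y(D)|)$. The representation complex $R_k(X)$ has vertex set $X(k)$ (a vertex $\tau$ is identified with $\{\tau\}$, so $\bigcup\{\tau\}=\tau$) and, for $1\le i\le d-k$, $i$-faces the sets $S$ of $i+1$ distinct elements of $X(k)$ with $\bigcup S\in X(i+k)$ and $|\bigcap S|=k$; it is pure of dimension $d-k$ and carries its own weights $w_{R_k(X)}$. *)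

(* Defs.v *)
From mathcomp Require Import all_boot all_order all_algebra.
Set Implicit Arguments. Unset Strict Implicit. Unset Printing Implicit Defensive.
Import GRing.Theory Num.Theory.
Local Open Scope ring_scope.

Definition faces (T : finType) (X : {set {set T}}) (j : nat) : {set {set T}} :=
  [set s in X | #|s| == j.+1].

Definition pure_complex (T : finType) (X : {set {set T}}) (d : nat) : Prop :=
  [/\ set0 \notin X,
      (forall s t : {set T}, s \in X -> t \subset s -> t != set0 -> t \in X),
      (forall s : {set T}, s \in X -> (#|s| <= d.+1)%N),
      (forall s : {set T}, s \in X -> exists2 t : {set T}, t \in faces X d & s \subset t)
    & faces X d != set0].

Definition weight (T : finType) (Y : {set {set T}}) (D : nat) (s : {set T}) : rat :=
  (#|[set t in faces Y D | s \subset t]|)%:R /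
  (('C(D.+1, #|s|) * #|faces Y D|)%N)%:R.

Definition union_of (T : finType) (S : {set {set T}}) : {set T} := \bigcup_(t in S) t.
Definition inter_of (T : finType) (S : {set {set T}}) : {set T} := \bigcap_(t in S) t.

(* The representation complex R_k(X): vertices {tau} for tau in X(k);
   i-faces (i >= 1) are sets S of i+1 elements of X(k) with union in X(i+k)
   and intersection of size k. (The bound i <= d-k is automatic since
   X(i+k) is empty for i+k > d in a d-dimensional complex.) *)
Definition repr_complex (T : finType) (k : nat) (X : {set {set T}})
  : {set {set {set T}}} :=
  [set S : {set {set T}} | (S \subset faces X k) &&
     ((#|S| == 1%N) ||
      [&& (2 <= #|S|)%N, union_of S \in faces X (#|S|.-1 + k) & #|inter_of S| == k])].

(* Main.v *)
Require Import Defs.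
From mathcomp Require Import all_boot all_order all_algebra.
From mathcomp Require Import ring zify.
Set Implicit Arguments. Unset Strict Implicit. Unset Printing Implicit Defensive.
Import GRing.Theory Num.Theory.

Section Aux.
Variable T : finType.

Definition Fam (tau J : {set T}) : {set {set T}} := [set J :|: [set x] | x in tau :\: J].

Lemma FamP (t tau J : {set T}) : reflect (exists2 x, x \in tau :\: J & t = J :|: [set x]) (t \in Fam tau J).
Proof. exact: imsetP. Qed.

Lemma card_Fam (tau J : {set T}) : #|Fam tau J| = #|tau :\: J|.
Proof.
apply: card_in_imset => x y; rewrite !inE => /andP[xJ _] /andP[yJ _] e.
have : x \in J :|: [set y] by rewrite -e !inE eqxx orbT.
by rewrite !inE (negbTE xJ) /= => /eqP.
Qed.

Lemma Fam_sub (t tau J : {set T}) : J \subset tau -> t \in Fam tau J -> t \subset tau.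
Proof.
move=> Jt /FamP[x]; rewrite inE => /andP[_ xt] ->.
by rewrite subUset Jt sub1set.
Qed.

Lemma sub_Fam (t tau J : {set T}) : t \in Fam tau J -> J \subset t.
Proof. by move=> /FamP[x _ ->]; rewrite subsetUl. Qed.

Lemma inter_Fam (tau J : {set T}) : J \subset tau -> (1 < #|tau :\: J|)%N -> inter_of (Fam tau J) = J.
Proof.
move=> Jt h; apply/eqP; rewrite eqEsubset; apply/andP; split; last first.
  by apply/bigcapsP => t; apply: sub_Fam.
apply/subsetP => z zI; apply/negPn/negP => zJ.
have : tau :\: J \subset [set z].
  apply/subsetP => x xd.
  have : z \in J :|: [set x].
    by move/bigcapP: zI; apply; apply/FamP; exists x.
  by rewrite !inE (negbTE zJ) /= eq_sym => ->.
by move/subset_leq_card; rewrite cards1 leqNgt h.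
Qed.

Lemma union_Fam (tau J : {set T}) : J \subset tau -> (0 < #|tau :\: J|)%N -> union_of (Fam tau J) = tau.
Proof.
move=> Jt h; apply/eqP; rewrite eqEsubset; apply/andP; split.
  by apply/bigcupsP => t; apply: Fam_sub.
case/card_gt0P: h => x0 x0d.
apply/subsetP => z zt; apply/bigcupP.
case: (boolP (z \in J)) => zJ.
  exists (J :|: [set x0]); first by apply/FamP; exists x0.
  by rewrite inE zJ.
exists (J :|: [set z]); first by apply/FamP; exists z => //; rewrite inE zJ.
by rewrite !inE eqxx orbT.
Qed.

Lemma binid (n a b : nat) : (a + b <= n)%N ->
  ('C(n, a) * 'C(n - a, b) = 'C(n, a + b) * 'C(a + b, a))%N.
Proof.
move=> h.
have H1 := bin_fact (n := n - a) (m := b) ltac:(lia).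
have H2 := bin_fact (n := n) (m := a) ltac:(lia).
have H3 := bin_fact (n := n) (m := a + b) h.
have H4 := bin_fact (n := a + b) (m := a) ltac:(lia).
have e1 : (n - a - b = n - (a + b))%N by lia.
have e2 : (a + b - a = b)%N by lia.
rewrite e1 in H1; rewrite e2 in H4.
apply/eqP; rewrite -(eqn_pmul2r (_ : 0 < a`! * b`! * (n - (a+b))`!)%N); last first.
  by rewrite !muln_gt0 !fact_gt0.
apply/eqP.
transitivity (n`!).
  by rewrite -H2 -H1; ring.
by rewrite -H3 -H4; ring.
Qed.

Lemma decomp1 (t J : {set T}) x : J \subset t -> t :\: J = [set x] -> t = J :|: [set x].
Proof.
move=> Jt ex; rewrite -ex; apply/setP => z; rewrite !inE.
by case: (boolP (z \in J)) => zI //=; rewrite (subsetP Jt _ zI).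
Qed.

Lemma sepsep (U : finType) (A : {set U}) (P Q : pred U) :
  [set S in [set s in A | P s] | Q S] = [set S in A | Q S && P S].
Proof. by apply/setP => S; rewrite !inE; case: (S \in A); case: (P S); case: (Q S). Qed.

Variable X : {set {set T}}.
Variable k : nat.
Hypothesis closX : forall s t : {set T}, s \in X -> t \subset s -> t != set0 -> t \in X.
Local Notation R := (repr_complex k X).

Lemma Fam_in_R (tau J : {set T}) : tau \in X -> J \subset tau -> #|J| = k -> (k.+2 <= #|tau|)%N ->
  Fam tau J \in R.
Proof.
move=> tX Jt cJ ct.
have cd : #|tau :\: J| = (#|tau| - k)%N by rewrite cardsDS // cJ.
rewrite inE; apply/andP; split.
  apply/subsetP => t tF; rewrite inE.
  have [x] := FamP _ _ _ tF; rewrite inE => /andP[xJ xt] et.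
  apply/andP; split.
    apply: closX tX (Fam_sub Jt tF) _; apply/set0Pn; exists x.
    by rewrite et !inE eqxx orbT.
  by rewrite et setUC cardsU1 xJ cJ add1n.
apply/orP; right.
rewrite card_Fam cd union_Fam ?inter_Fam ?cd ?cJ; try lia.
rewrite inE tX /=.
apply/and3P; split => //; apply/eqP; lia.
Qed.

Lemma R_struct S : S \in R -> (2 <= #|S|)%N ->
  [/\ S = Fam (union_of S) (inter_of S), inter_of S \subset union_of S,
      #|inter_of S| = k, union_of S \in X & #|union_of S| = (#|S| + k)%N].
Proof.
rewrite inE => /andP[SF] /orP[/eqP c1 S2|/and3P[_ + /eqP cI] S2]; first lia.
rewrite inE => /andP[UX /eqP cU].
have ecU : #|union_of S| = (#|S| + k)%N by rewrite cU; lia.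
have [t0 t0S] : exists t0, t0 \in S by apply/card_gt0P; lia.
have IU : inter_of S \subset union_of S.
  apply: subset_trans (bigcap_inf _ t0S) (bigcup_sup _ t0S).
split => //.
apply/eqP; rewrite eqEcard card_Fam cardsDS // ecU cI addnK leqnn andbT.
apply/subsetP => t tS; apply/FamP.
have := subsetP SF t tS; rewrite inE => /andP[_ /eqP ct].
have It : inter_of S \subset t by apply: bigcap_inf.
have : #|t :\: inter_of S| == 1%N by rewrite cardsDS // ct cI; apply/eqP; lia.
case/cards1P => x ex.
have xt : x \in t :\: inter_of S by rewrite ex inE.
exists x.
  move: xt; rewrite !inE => /andP[-> xt] /=.
  by apply: (subsetP (bigcup_sup _ tS)).
rewrite -ex; apply/setP => z; rewrite !inE.
by case: (boolP (z \in inter_of S)) => zI //=; rewrite (subsetP It _ zI).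
Qed.

Lemma R_card_union S : S \in R -> #|union_of S| = (#|S| + k)%N.
Proof.
move=> SR; case: (ltnP 1 #|S|) => h; first by case: (R_struct SR h).
move: SR; rewrite inE => /andP[SF /orP[/cards1P[t et]|]]; last first.
  by case/and3P=> h2; move: h; rewrite leqNgt h2.
rewrite et /union_of big_set1 cards1.
by move: SF; rewrite et sub1set inE => /andP[_ /eqP ->].
Qed.

Lemma fiber tau (Q : pred {set {set T}}) : tau \in X -> (k.+2 <= #|tau|)%N ->
  #|[set S in R | (union_of S == tau) && Q S]| =
  #|[set J : {set T} | (J \subset tau) && ((#|J| == k) && Q (Fam tau J))]|.
Proof.
move=> tX ct.
have -> : [set S in R | (union_of S == tau) && Q S] =
   Fam tau @: [set J : {set T} | (J \subset tau) && ((#|J| == k) && Q (Fam tau J))].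
  apply/setP => S; apply/idP/idP.
    rewrite inE => /andP[SR /andP[/eqP eU QS]].
    have S2 : (2 <= #|S|)%N by move: (R_card_union SR); rewrite eU; lia.
    case: (R_struct SR S2); rewrite eU => eS IU cI _ _.
    apply/imsetP; exists (inter_of S) => //.
    by rewrite inE IU cI eqxx /= -eS.
  case/imsetP => J; rewrite inE => /and3P[Jt /eqP cJ QF] ->.
  have cd : #|tau :\: J| = (#|tau| - k)%N by rewrite cardsDS // cJ.
  rewrite inE Fam_in_R // union_Fam ?cd ?eqxx //; lia.
apply: card_in_imset => J1 J2; rewrite !inE => /andP[J1t /andP[/eqP c1 _]]
  /andP[J2t /andP[/eqP c2 _]] e.
have h1 : inter_of (Fam tau J1) = J1 by apply: inter_Fam => //; rewrite cardsDS // c1; lia.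
have h2 : inter_of (Fam tau J2) = J2 by apply: inter_Fam => //; rewrite cardsDS // c2; lia.
by rewrite -h1 e h2.
Qed.

Lemma card_by_union (A : {set {set {set T}}}) (B : {set {set T}}) :
  (forall S, S \in A -> union_of S \in B) ->
  #|A| = (\sum_(tau in B) #|[set S in A | union_of S == tau]|)%N.
Proof.
move=> h; rewrite -sum1_card (partition_big (fun S => union_of S) (mem B)) //=.
apply: eq_bigr => tau _; rewrite -sum1_card; apply: eq_bigl => S.
by rewrite inE.
Qed.

End Aux.

Local Open Scope ring_scope.
Theorem mainTheorem13 (T : finType) (X : {set {set T}}) (d k i : nat) :
  pure_complex X d -> (k < d)%N -> (i <= d - k)%N ->
  forall (sigma : {set T}), sigma \in faces X (k + i) ->
  forall (r : {set {set T}}), r \in repr_complex k X -> union_of r = sigma ->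
  let N := #|[set r' in repr_complex k X | union_of r' == sigma]| in
  weight (repr_complex k X) (d - k) r = (N%:R)^-1 * weight X d sigma /\
  N = (if (0 < i)%N then 'C(k + i + 1, k) else 1%N).
Proof.
move=> [X0 closX bndX topX XDn0] kd id sigma sF r rR ur N.
have [sX cs] : sigma \in X /\ #|sigma| = (k+i).+1.
  by move: sF; rewrite inE => /andP[-> /eqP].
have cr : #|r| = i.+1 by have := R_card_union rR; rewrite ur cs; lia.
have ctau : forall tau, tau \in faces X d -> tau \in X /\ #|tau| = d.+1.
  by move=> tau; rewrite inE => /andP[-> /eqP].
set c := if (0 < i)%N then 1%N else k.+1.
have Nval : N = (if (0 < i)%N then 'C(k + i + 1, k) else 1%N).
  rewrite /N; case: ifP => i0.
    rewrite (_ : [set r' in repr_complex k X | union_of r' == sigma] =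
                 [set S in repr_complex k X | (union_of S == sigma) && predT S]); last first.
      by apply/setP => S; rewrite !inE andbT.
    rewrite fiber //; last by rewrite cs; lia.
    rewrite addn1 -cs -cards_draws; apply: eq_card => J; rewrite !inE andbT //.
  rewrite (_ : [set r' in repr_complex k X | union_of r' == sigma] = [set [set sigma]]) ?cards1 //.
  apply/setP => S; rewrite in_set in_set1; apply/idP/idP.
    case/andP => SR /eqP uS.
    have := R_card_union SR; rewrite uS cs => h.
    have : #|S| == 1%N by apply/eqP; lia.
    case/cards1P => t et; move: uS; rewrite et /union_of big_set1 => ->; by [].
  move/eqP => ->; apply/andP; split; last by rewrite /union_of big_set1.
  rewrite inE sub1set cards1 eqxx /= andbT inE sX cs.
  have i00 : i = 0%N by move: i0; case: (i).
  by rewrite i00 addn0 eqxx.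
split => //.
have cN : (c * N = 'C(k + i + 1, k))%N.
  rewrite Nval /c; case: ifP => i0; first by rewrite mul1n.
  have i00 : i = 0%N by move: i0; case: (i).
  by rewrite i00 addn0 addn1 binSn muln1.
have Sfaces : forall S, S \in faces (repr_complex k X) (d - k) -> union_of S \in faces X d.
  move=> S; rewrite [S \in faces _ _]in_set => /andP[SR /eqP cS].
  have S2 : (2 <= #|S|)%N by rewrite cS; lia.
  case: (R_struct SR S2) => _ _ _ UX cU.
  by rewrite inE UX cU cS; apply/eqP; lia.
have DR : #|faces (repr_complex k X) (d - k)| = (#|faces X d| * 'C(d.+1, k))%N.
  rewrite (@card_by_union _ _ (faces X d)) // -sum_nat_const.
  apply: eq_bigr => tau tF; have [tX ct] := ctau _ tF.
  rewrite /faces sepsep fiber //; last by rewrite ct; lia.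
  rewrite -ct -cards_draws; apply: eq_card => J; rewrite !inE.
  case: (boolP (J \subset tau)) => //= Jt; case: (boolP (#|J| == k)) => //= /eqP cJ.
  by rewrite card_Fam cardsDS // cJ ct; apply/eqP; lia.
have NR : #|[set t in faces (repr_complex k X) (d - k) | r \subset t]| =
          (#|[set t in faces X d | sigma \subset t]| * c)%N.
  rewrite (@card_by_union _ _ (faces X d)); last first.
    by move=> S; rewrite in_set => /andP[/Sfaces].
  rewrite -sum_nat_const [RHS](eq_bigl (fun t => (t \in faces X d) && (sigma \subset t))); last first.
    by move=> t; rewrite in_set.
  rewrite [RHS]big_mkcondr /=.
  apply: eq_bigr => tau tF; have [tX ct] := ctau _ tF.
  rewrite /faces !sepsep.
  rewrite (@eq_finset _ _ (fun S => (S \in repr_complex k X) && ((union_of S == tau) &&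
     ((r \subset S) && (#|S| == (d - k).+1))))); last by move=> S; rewrite /= !andbA.
  rewrite fiber //; last by rewrite ct; lia.
  case: (boolP (sigma \subset tau)) => st; last first.
    apply/eqP; rewrite cards_eq0; apply/eqP/setP => J; rewrite !inE.
    apply/negP => /and3P[Jt _ /andP[rF _]]; apply: (negP st).
    rewrite -ur; apply/bigcupsP => t tr; exact: Fam_sub Jt (subsetP rF t tr).
  rewrite /c; case: ifP => i0.
    have r2 : (2 <= #|r|)%N by rewrite cr; lia.
    case: (R_struct rR r2) => er IU cI _ _.
    rewrite ur in er IU.
    rewrite (_ : [set J | _ ] = [set inter_of r]) ?cards1 //.
    apply/setP => J; rewrite !inE; apply/idP/idP.
      case/and3P => Jt /eqP cJ /andP[rF _].
      rewrite eqEcard cJ cI leqnn andbT.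
      by apply/bigcapsP => t tr; apply: sub_Fam (subsetP rF t tr).
    move/eqP => ->.
    have It : inter_of r \subset tau := subset_trans IU st.
    rewrite It cI eqxx card_Fam cardsDS // cI ct /=.
    apply/andP; split; last by apply/eqP; lia.
    rewrite {1}er; apply/subsetP => t /FamP [x xd ->]; apply/FamP; exists x => //.
    by move: xd; rewrite !inE => /andP[-> /(subsetP st)].
  have i00 : i = 0%N by move: i0; case: (i).
  have er : r = [set sigma].
    have : #|r| == 1%N by rewrite cr i00.
    case/cards1P => t et; move: ur; rewrite et /union_of big_set1 => ->; by [].
  rewrite (_ : [set J | _ ] = [set J : {set T} | J \subset sigma & #|J| == k]).
    by rewrite cards_draws cs i00 addn0 binSn.
  apply/setP => J; rewrite !inE er sub1set; apply/idP/idP.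
    case/and3P => Jt -> /andP[sF' _]; rewrite andbT; exact: sub_Fam sF'.
  case/andP => Js /eqP cJ.
  have Jt := subset_trans Js st.
  rewrite Jt cJ eqxx card_Fam cardsDS // cJ ct /=.
  apply/andP; split; last by apply/eqP; lia.
  have : #|sigma :\: J| == 1%N by rewrite cardsDS // cs cJ i00; apply/eqP; lia.
  case/cards1P => x ex.
  apply/FamP; exists x; last exact: decomp1 Js ex.
  have : x \in sigma :\: J by rewrite ex inE.
  by rewrite !inE => /andP[-> /(subsetP st)].
have XDpos : (0 < #|faces X d|)%N by rewrite card_gt0.
have Cpos : (0 < 'C(d.+1, (k + i).+1))%N by rewrite bin_gt0; lia.
have cpos : (0 < c)%N by rewrite /c; case: ifP.
have Npos : (0 < N)%N by rewrite Nval; case: ifP => // _; rewrite bin_gt0; lia.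
have B := binid (n := d.+1) (a := k) (b := i.+1) ltac:(lia).
have E : ('C((d - k).+1, i.+1) * (#|faces X d| * 'C(d.+1, k)) =
         'C(d.+1, (k + i).+1) * #|faces X d| * (c * N))%N.
  move: B; rewrite (subSn (ltnW kd)) addnS => B.
  by rewrite cN addn1 mulnCA (mulnC 'C((d - k).+1, _)) B; ring.
rewrite /weight NR DR cr cs E !natrM.
field.
by rewrite !pnatr_eq0 -!lt0n Cpos XDpos cpos Npos.
Qed.
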